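(* Let $\mathbf{A}$ be a Mal'cev algebra with universe $\{0,1,2\}$. If $\mu$ is a congruence of $\mathbf{A}$ different from $0_A$ and $1_A$, then $\mu$ is the only such congruence of $\mathbf{A}$.
   Context: A Mal'cev algebra is an algebra with a term operation $d$ satisfying $d(y,x,x)\approx d(x,x,y)\approx y$. $0_A$ denotes the equality relation and $1_A=A^2$. *)

(* Defs.v *)
From mathcomp Require Import all_boot all_order.
Set Implicit Arguments. Unset Strict Implicit. Unset Printing Implicit Defensive.

Record algebra (A : Type) := Algebra {
  op_idx : Type;
  arity : op_idx -> nat;
  op : forall f : op_idx, ('I_(arity f) -> A) -> A
}.

Inductive term_op (A : Type) (Alg : algebra A) (n : nat) :
  (('I_n -> A) -> A) -> Prop :=
| term_proj (i : 'I_n) : term_op Alg (fun x => x i)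
| term_app (f : op_idx Alg) (gs : 'I_(arity f) -> (('I_n -> A) -> A)) :
    (forall k, term_op Alg (gs k)) ->
    term_op Alg (fun x => @op A Alg f (fun k => gs k x)).

Definition trip (A : Type) (a b c : A) : 'I_3 -> A :=
  fun i => nth a [:: a; b; c] i.

Definition malcev (A : Type) (Alg : algebra A) : Prop :=
  exists d, term_op Alg (n := 3) d /\
    forall x y : A, d (trip y x x) = y /\ d (trip x x y) = y.

Definition congruence (A : Type) (Alg : algebra A) (mu : A -> A -> Prop) : Prop :=
  (forall x, mu x x) /\ (forall x y, mu x y -> mu y x) /\
  (forall x y z, mu x y -> mu y z -> mu x z) /\
  (forall (f : op_idx Alg) (a b : 'I_(arity f) -> A),
      (forall k, mu (a k) (b k)) -> mu (@op A Alg f a) (@op A Alg f b)).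

(* 0_A (equality) and 1_A (all pairs), compared extensionally *)
Definition is_zero_rel (A : Type) (mu : A -> A -> Prop) : Prop :=
  forall x y, mu x y <-> x = y.
Definition is_one_rel (A : Type) (mu : A -> A -> Prop) : Prop :=
  forall x y, mu x y.

(* Main.v *)
Require Import Defs.
From mathcomp Require Import all_boot all_order.
From Stdlib Require Import Classical_Prop.
Set Implicit Arguments. Unset Strict Implicit.

Lemma term_compat (A : Type) (Alg : algebra A) (mu : A -> A -> Prop) n
  (t : ('I_n -> A) -> A) :
  congruence Alg mu -> term_op Alg t ->
  forall a b, (forall i, mu (a i) (b i)) -> mu (t a) (t b).
Proof.
move=> [_ [_ [_ Hop]]] Ht; elim: Ht => [i|f gs _ IH] a b Hab /=.
  exact: Hab.
apply: Hop => k; exact: IH.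
Qed.

Lemma trip_compat (A : Type) (mu : A -> A -> Prop) p q r p' q' r' :
  mu p p' -> mu q q' -> mu r r' -> forall i, mu (trip p q r i) (trip p' q' r' i).
Proof. by move=> H1 H2 H3 [[|[|[|i]]] Hi]. Qed.

Lemma perm_lem (A : Type) (Alg : algebra A) (mu nu : A -> A -> Prop) :
  malcev Alg -> congruence Alg mu -> congruence Alg nu ->
  forall p q r, mu p q -> nu q r -> exists w, nu p w /\ mu w r.
Proof.
move=> [d [Hd Hm]] Cm Cn p q r Hpq Hqr.
exists (d (trip p q r)); split.
- have := @term_compat _ _ _ _ _ Cn Hd (trip p q r) (trip p q q).
  have [Rn [Sn _]] := Cn.
  rewrite (proj1 (Hm q p)) => H; apply: (Sn); apply: H.
  by apply: trip_compat; [apply: Rn | apply: Rn | apply: (Sn)].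
- have := @term_compat _ _ _ _ _ Cm Hd (trip p q r) (trip q q r).
  have [Rm _] := Cm.
  rewrite (proj2 (Hm q r)) => H; apply: H.
  by apply: trip_compat; [ | apply: Rm | apply: Rm].
Qed.

Lemma cover3 (a b c w : 'I_3) : a != b -> a != c -> b != c ->
  [\/ w = a, w = b | w = c].
Proof.
move: a b c w => [[|[|[|a]]] Ha] [[|[|[|b]]] Hb] [[|[|[|c]]] Hc] [[|[|[|w]]] Hw] //=;
  try (by move=> *; (apply: Or31 + apply: Or32 + apply: Or33); apply: val_inj).
Qed.

Lemma none3 (x y p q : 'I_3) : x != y -> p != q -> p != x -> p != y ->
  q != x -> q != y -> False.
Proof.
move: x y p q => [[|[|[|a]]] Ha] [[|[|[|b]]] Hb] [[|[|[|c]]] Hc] [[|[|[|w]]] Hw] //=.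
Qed.

Lemma key (Alg : algebra 'I_3) (mu nu : 'I_3 -> 'I_3 -> Prop) :
  malcev Alg -> congruence Alg mu -> congruence Alg nu -> ~ is_one_rel nu ->
  forall a b c : 'I_3, a != b -> a != c -> b != c ->
  mu a c -> nu c b -> ~ mu c b -> False.
Proof.
move=> M Cm Cn N1 a b c Hab Hac Hbc Hmac Hncb Hmcb.
have [w [Hnw Hmw]] := perm_lem M Cm Cn Hmac Hncb.
have Cn' := Cn; case: Cn' => Rn [Sn [Tn _]].
have Cm' := Cm; case: Cm' => Rm [Sm [Tm _]].
have tot : nu a c -> False.
  move=> Hnac; apply: N1 => x y.
  have nab : nu a b by apply: Tn Hnac Hncb.
  have [->|->|->] := cover3 x Hab Hac Hbc;
  have [->|->|->] := cover3 y Hab Hac Hbc; eauto.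
have [E|E|E] := cover3 w Hab Hac Hbc; subst w.
- apply: Hmcb; apply: Tm (Sm _ _ Hmac) Hmw.
- apply: tot; apply: Tn Hnw (Sn _ _ Hncb).
- exact: tot.
Qed.

Ltac cl Sm Sn Hnm := try done; try solve [ by rewrite eq_sym | by apply: Sm | by apply: Sn
  | by apply/eqP => E; subst; (apply: Hnm + (apply: Hnm; apply: Sm))
  | by move=> H; apply: Hnm; apply: Sm ].

Lemma half (Alg : algebra 'I_3) (mu nu : 'I_3 -> 'I_3 -> Prop) :
  malcev Alg ->
  congruence Alg mu -> ~ is_zero_rel mu ->
  congruence Alg nu -> ~ is_one_rel nu ->
  forall x y, nu x y -> mu x y.
Proof.
move=> M Cm Z Cn N1 x y Hxy.
have Cn' := Cn; case: Cn' => Rn [Sn [Tn _]].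
have Cm' := Cm; case: Cm' => Rm [Sm [Tm _]].
have [pq|] := Classical_Prop.classic (exists p q, p != q /\ mu p q); last first.
  move=> H; exfalso; apply: Z => p q; split.
    move=> Hpq; case: (eqVneq p q) => // Hne; exfalso; apply: H; by exists p, q.
  by move=> ->.
case: pq => p [q [Hpq Hmpq]].
case: (eqVneq x y) => [->|Hxy']; first exact: Rm.
case: (Classical_Prop.classic (mu x y)) => // Hnm; exfalso.
case: (eqVneq p x) => [E|Hpx].
  subst p; apply: (key M Cm Cn N1 (a := q) (b := y) (c := x)); cl Sm Sn Hnm.
case: (eqVneq p y) => [E|Hpy].
  subst p; apply: (key M Cm Cn N1 (a := q) (b := x) (c := y)); cl Sm Sn Hnm.
case: (eqVneq q x) => [E|Hqx].
  subst q; apply: (key M Cm Cn N1 (a := p) (b := y) (c := x)); cl Sm Sn Hnm.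
case: (eqVneq q y) => [E|Hqy].
  subst q; apply: (key M Cm Cn N1 (a := p) (b := x) (c := y)); cl Sm Sn Hnm.
exact: (none3 Hxy' Hpq Hpx Hpy Hqx Hqy).
Qed.

Theorem lemma4p1 (Alg : algebra 'I_3) (mu : 'I_3 -> 'I_3 -> Prop) :
  malcev Alg ->
  congruence Alg mu -> ~ is_zero_rel mu -> ~ is_one_rel mu ->
  forall nu : 'I_3 -> 'I_3 -> Prop,
    congruence Alg nu -> ~ is_zero_rel nu -> ~ is_one_rel nu ->
    forall x y, nu x y <-> mu x y.
Proof.
move=> M Cm Zm Om nu Cn Zn On x y; split.
- exact: (half M Cm Zm Cn On).
- exact: (half M Cn Zn Cm Om).
Qed.
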